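(* For every $\varepsilon>0$ and every instance of the scheduling problem described in the context satisfying the slack assumption with parameter $\varepsilon$, let $J$ be the set of jobs admitted by the two-threshold algorithm and $F\subseteq J$ the set of admitted jobs that it finishes (completes by their deadlines). Then \[\sum_{j\in F}w_j\ \ge\ \frac12\sum_{j\in J}w_j.\]
   Context: Problem: $m$ unrelated machines; jobs arrive online; job $j$ is revealed at release date $r_j$ with processing times $p_{ij}\in\mathbb{R}_{>0}\cup\{\infty\}$ on machines $i$, weight $w_j>0$, deadline $d_j$. The density of $j$ on $i$ is $\rho_{ij}=w_j/p_{ij}$. Preemption is allowed; the schedule is non-migratory (a job admitted to machine $i$ is processed only there and completes after receiving $p_{ij}$ units of processing). Slack assumption with parameter $\varepsilon>0$: $d_j-r_j\ge(1+\varepsilon)p_{ij}$ whenever $p_{ij}<\infty$. Two-threshold algorithm: let $\varepsilon'=\min\{\varepsilon,1\}$. A job $j$ may be admitted to a machine $i$ at a time $a_j$; it is then never processed on any other machine. Job $j$ admitted to $i$ is active on $i$ at time $\tau\ge a_j$ if its remaining processing requirement on $i$ is positive and at most $a_j+(1+\varepsilon'/2)p_{ij}-\tau$; once a job stops being active without having completed, it is discarded and never processed again. Scheduling routine: at every time $\tau$, each machine $i$ processes the active job on $i$ of highest density $\rho_{ij}$. Admission routine: it is invoked at every time $\tau$ at which a job is released or a job completes. It loops over $i=1,\dots,m$; for machine $i$, let $j^\star$ be a job of maximum density $\rho_{ij^\star}$ among the jobs with $r_{j^\star}\le\tau$ and $d_{j^\star}-\tau\ge(1+\varepsilon'/2)p_{ij^\star}$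 that have not been admitted and not previously been considered. If no job is active on $i$ at $\tau$, $j^\star$ is admitted to $i$ with $a_{j^\star}=\tau$. Otherwise, let $j$ be the active job on $i$ of highest density; $j^\star$ is admitted to $i$ with $a_{j^\star}=\tau$ if one of the following holds: (1) $p_{ij^\star}\le\frac{\varepsilon'}{2}p_{ij}$ and $\rho_{ij^\star}\ge\frac{8}{\varepsilon'}\rho_{ij}$; (2) $\frac{\varepsilon'}{2}p_{ij}<p_{ij^\star}\le p_{ij}$ and $w_{j^\star}\ge 4w_j$; (3) $p_{ij^\star}>p_{ij}$ and $\rho_{ij^\star}\ge 4\rho_{ij}$. A newly admitted job starts processing immediately. A finished job is an admitted job that completes (it does so by time $a_j+(1+\varepsilon'/2)p_{ij}\le d_j$). *)

(* Defs.v *)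
From HB Require Import structures.
From mathcomp Require Import all_boot all_order all_algebra.
From mathcomp Require Import boolp reals.
Set Implicit Arguments.
Unset Strict Implicit.
Unset Printing Implicit Defensive.
Import Order.TTheory GRing.Theory Num.Theory.
Local Open Scope ring_scope.

(* Instance: m machines ('I_m), n jobs ('I_n); release dates r, weights w,
   deadlines d, processing times p i j : option R (None = infinity). *)
Section TwoThreshold.
Context (R : realType) (m n : nat).
Context (eps : R) (r w d : 'I_n -> R) (p : 'I_m -> 'I_n -> option R).

Definition valid_instance : Prop :=
  0 < eps /\ (forall j, 0 < w j) /\ (forall i j q, p i j = Some q -> 0 < q).

Definition slack_assumption : Prop :=
  forall i j q, p i j = Some q -> (1 + eps) * q <= d j - r j.

Definition eps' : R := Num.min eps 1.
Definition cst : R := 1 + eps' / 2.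

Definition density (i : 'I_m) (j : 'I_n) : R :=
  match p i j with Some q => w j / q | None => 0 end.

(* An execution of the algorithm (continuous time):
   mach j  = machine j is admitted to (None = never admitted),
   adm j   = admission time a_j,
   rem j t = remaining processing requirement of j (on its machine) at time t,
   sched i t = job processed by machine i at time t (None = idle),
   consid t i = job j* considered for machine i by the admission routine
                invoked at time t. *)
Record run := Run {
  mach : 'I_n -> option 'I_m;
  adm : 'I_n -> R;
  rem : 'I_n -> R -> R;
  sched : 'I_m -> R -> option 'I_n;
  consid : R -> 'I_m -> option 'I_n }.

Variable s : run.

(* j (admitted to i) is active on i at time tau; the clause on all earlier
   times t encodes that a job that stopped being active is discarded. *)
Definition active (i : 'I_m) (j : 'I_n) (tau : R) : Prop :=
  mach s j = Some i /\ adm s j <= tau /\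
  exists q, p i j = Some q /\ 0 < rem s j tau /\
    forall t, adm s j <= t <= tau -> rem s j t <= adm s j + cst * q - t.

(* active and admitted strictly before tau (used by the admission routine
   invoked at tau, before the admissions made at tau) *)
Definition active_before (i : 'I_m) (j : 'I_n) (tau : R) : Prop :=
  active i j tau /\ adm s j < tau.

Definition admitted (j : 'I_n) : bool := mach s j != None.

Definition admitted_before (j : 'I_n) (tau : R) : Prop :=
  admitted j /\ adm s j < tau.

Definition completes (j : 'I_n) (tau : R) : Prop :=
  admitted j /\ adm s j <= tau /\ rem s j tau = 0 /\
  forall t, adm s j <= t < tau -> 0 < rem s j t.

Definition finished (j : 'I_n) : Prop := exists tau, completes j tau.

Definition event (tau : R) : Prop :=
  (exists j, r j = tau) \/ (exists j, completes j tau).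

Definition candidate (tau : R) (i : 'I_m) (j : 'I_n) : Prop :=
  r j <= tau /\ (exists q, p i j = Some q /\ cst * q <= d j - tau) /\
  ~ admitted_before j tau /\
  forall i' : 'I_m, (i' < i)%N -> consid s tau i' <> Some j.

Definition thresholds (i : 'I_m) (js j : 'I_n) : Prop :=
  exists qs q, p i js = Some qs /\ p i j = Some q /\
  [\/ qs <= eps' / 2 * q /\ 8 / eps' * density i j <= density i js,
      eps' / 2 * q < qs <= q /\ 4 * w j <= w js
    | q < qs /\ 4 * density i j <= density i js].

Definition admitted_at (i : 'I_m) (j : 'I_n) (tau : R) : Prop :=
  mach s j = Some i /\ adm s j = tau.

Definition is_two_threshold_run : Prop :=
  (* the schedule is piecewise constant (right-continuous, finitely many
     breakpoints) *)
  (exists bs : seq R, forall (i : 'I_m) (t1 t2 : R), t1 <= t2 ->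
      (forall b, b \in bs -> ~ (t1 < b <= t2)) -> sched s i t1 = sched s i t2)
  /\ (forall j i, mach s j = Some i ->
        (exists q, p i j = Some q /\ rem s j (adm s j) = q) /\
        forall t1 t2, t1 <= t2 ->
          ((forall u, t1 <= u < t2 -> sched s i u = Some j) ->
              rem s j t2 = rem s j t1 - (t2 - t1)) /\
          ((forall u, t1 <= u < t2 -> sched s i u <> Some j) ->
              rem s j t2 = rem s j t1))
  /\ (forall i tau, match sched s i tau with
        | Some j => active i j tau /\
                    forall k, active i k tau -> density i k <= density i j
        | None => forall k, ~ active i k tau end)
  /\ (forall tau, event tau -> forall i : 'I_m,
        (consid s tau i = None <-> forall j, ~ candidate tau i j) /\
        forall js, consid s tau i = Some js ->
          candidate tau i js /\
          (forall k, candidate tau i k -> density i k <= density i js) /\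
          ((forall k, ~ active_before i k tau) -> admitted_at i js tau) /\
          ((exists k, active_before i k tau) ->
             exists j, active_before i j tau /\
               (forall k, active_before i k tau -> density i k <= density i j) /\
               (admitted_at i js tau <-> thresholds i js j)))
  /\ (forall j i, mach s j = Some i ->
        event (adm s j) /\ consid s (adm s j) i = Some j).

End TwoThreshold.

(* Main.v *)
Require Import Defs.
From HB Require Import structures.
From mathcomp Require Import all_boot all_order all_algebra.
From mathcomp Require Import boolp classical_sets reals.
From mathcomp Require Import ring lra.
Import Order.TTheory GRing.Theory Num.Theory.
Local Open Scope ring_scope.
Local Open Scope classical_set_scope.
Lemma first_zero (R : realType) (f : R -> R) (L a b : R) : 0 < L ->
  (forall x y, `|f x - f y| <= L * `|x - y|) -> a <= b -> 0 < f a -> f b <= 0 ->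
  exists c, [/\ a < c, c <= b, f c = 0 & forall t, a <= t < c -> 0 < f t].
Proof.
move=> L0 Lip ab fa fb.
pose E := [set t | a <= t <= b /\ forall u, a <= u <= t -> 0 < f u].
have Ea : E a.
  split; first by rewrite lexx ab.
  by move=> u /andP[h1 h2]; have -> : u = a by apply/eqP; rewrite eq_le h1 h2.
have ubE : ubound E b by move=> t [/andP[_ ->]].
have hs : has_sup E by split; [exists a | exists b].
set c := sup E.
have ac : a <= c by apply: sup_upper_bound.
have cb : c <= b by apply: ge_sup => //; exists a.
have below : forall t, a <= t < c -> 0 < f t.
  move=> t /andP[atl tc].
  have tc0 : 0 < c - t by rewrite subr_gt0.
  have [e [_ Ee] lte] := sup_adherent tc0 hs.
  apply: Ee; rewrite atl /=; rewrite /c in lte; lra.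
have Lipl : forall x y, f y - L * `|x - y| <= f x.
  move=> x y; have := Lip x y; rewrite ler_norml; lra.
have fc0 : f c = 0.
  have [fcn|fcp|//] := ltgtP (f c) 0.
  - pose dl := - f c / (2 * L).
    have dl0 : 0 < dl by rewrite /dl divr_gt0 // ?mulr_gt0 //; lra.
    have Ldl : L * dl = - f c / 2.
      by rewrite /dl; field; rewrite gt_eqF.
    have [e Ee' lte] := sup_adherent dl0 hs; rewrite -/c in lte.
    have ec : e <= c by exact: (sup_upper_bound hs Ee').
    have fe : 0 < f e by case: Ee' => /andP[ae _] Ee; apply: Ee; rewrite lexx ae.
    have := Lip e c; rewrite ler_norml => /andP[_ h].
    have : L * `|e - c| <= L * dl.
      rewrite ler_pM2l // ler0_norm; lra.
    lra.
  - have cb' : c < b by rewrite lt_neqAle cb andbT; apply/eqP => ecb; move: fcp; rewrite ecb; lra.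
    pose dl := Num.min (f c / (2 * L)) (b - c).
    have dl0 : 0 < dl by rewrite /dl lt_min divr_gt0 ?mulr_gt0 //=; lra.
    have dl1 : dl <= f c / (2 * L) by rewrite /dl ge_min lexx.
    have dl2 : dl <= b - c by rewrite /dl ge_min lexx orbT.
    have Ldl : L * dl <= f c / 2.
      have -> : f c / 2 = L * (f c / (2 * L)) by field; rewrite gt_eqF.
      by rewrite ler_pM2l.
    have Ecd : E (c + dl).
      split; first by apply/andP; split; lra.
      move=> u /andP[au ud].
      have [uc|cu] := ltP u c; first by apply: below; rewrite au.
      have := Lipl u c.
      have : L * `|u - c| <= L * dl by rewrite ler_pM2l // ger0_norm; lra.
      lra.
    have := sup_upper_bound hs Ecd; rewrite -/c; lra.
exists c; split => //.
rewrite lt_neqAle ac andbT; apply/eqP => eac; move: fa; rewrite eac fc0; lra.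
Qed.
Local Close Scope classical_set_scope.

Lemma pw_ind (R : realType) (bs : seq R) (Pr : R -> R -> Prop) :
  (forall t1 t2, t1 <= t2 -> (forall b, b \in bs -> ~ (t1 < b < t2)) -> Pr t1 t2) ->
  (forall t1 t2 t3, t1 <= t2 -> t2 <= t3 -> Pr t1 t2 -> Pr t2 t3 -> Pr t1 t3) ->
  forall t1 t2, t1 <= t2 -> Pr t1 t2.
Proof.
move=> base comp.
suff: forall l : seq R, forall t1 t2, t1 <= t2 ->
   (forall b, b \in bs -> b \notin l -> ~ (t1 < b < t2)) -> Pr t1 t2.
  by move=> H t1 t2 le; apply: (H bs t1 t2 le) => b ->.
elim=> [|b0 l IH] t1 t2 le H.
  by apply: base => // b bin; apply: H.
have [/andP[h1 h2]|nb] := boolP (t1 < b0 < t2).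
  apply: (comp t1 b0 t2); [exact: ltW|exact: ltW| |].
  - apply: IH; first exact: ltW.
    move=> b bin bl /andP[c1 c2].
    have [eb|neb] := eqVneq b b0; first by move: c2; rewrite eb ltxx.
    apply: (H b bin); first by rewrite in_cons negb_or neb bl.
    by rewrite c1 /=; apply: lt_trans c2 h2.
  - apply: IH; first exact: ltW.
    move=> b bin bl /andP[c1 c2].
    have [eb|neb] := eqVneq b b0; first by move: c1; rewrite eb ltxx.
    apply: (H b bin); first by rewrite in_cons negb_or neb bl.
    by rewrite c2 andbT; apply: lt_trans h1 c1.
apply: IH => // b bin bl.
have [eb|neb] := eqVneq b b0; first by rewrite eb; move/negP: nb.
by apply: (H b bin); rewrite in_cons negb_or neb bl.
Qed.

Section Main.
Variables (R : realType) (m n : nat) (eps : R) (r w d : 'I_n -> R)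
  (p : 'I_m -> 'I_n -> option R) (s : run R m n).
Hypothesis Hv : valid_instance eps w p.
Hypothesis Hrun : is_two_threshold_run eps r w d p s.

Local Notation act := (active eps p s).
Local Notation actb := (active_before eps p s).
Local Notation rho := (density w p).
Local Notation rm := (Defs.rem s).
Local Notation ad := (adm s).
Local Notation mc := (mach s).
Local Notation sc := (sched s).
Local Notation e' := (eps' eps).
Local Notation cs := (cst eps).

Lemma e'_gt0 : 0 < e'.
Proof. by case: Hv => h _; rewrite /eps' lt_min h ltr01. Qed.
Lemma e'_le1 : e' <= 1.
Proof. by rewrite /eps' ge_min lexx orbT. Qed.
Lemma cs_def : cs = 1 + e' / 2.
Proof. by []. Qed.

Lemma w_gt0 k : 0 < w k.
Proof. by case: Hv => _ []. Qed.
Lemma q_gt0 {i k q} : p i k = Some q -> 0 < q.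
Proof. by case: Hv => _ [_]; apply. Qed.
Lemma rhoE {i k q} : p i k = Some q -> rho i k = w k / q.
Proof. by rewrite /density => ->. Qed.
Lemma rho_gt0 {i k q} : p i k = Some q -> 0 < rho i k.
Proof. by move=> h; rewrite (rhoE h) divr_gt0 ?w_gt0 // (q_gt0 h). Qed.
Lemma rho_ge0 i k : 0 <= rho i k.
Proof.
rewrite /density; case h: (p i k) => [q|] //.
by rewrite ltW // divr_gt0 ?w_gt0 // (q_gt0 h).
Qed.

Lemma adm_q {k i} : mc k = Some i -> exists q, p i k = Some q /\ rm k (ad k) = q.
Proof. by case: Hrun => _ [H _] h; case: (H k i h). Qed.

Lemma dyn_on {k i t1 t2} : mc k = Some i -> t1 <= t2 ->
  (forall u, t1 <= u < t2 -> sc i u = Some k) -> rm k t2 = rm k t1 - (t2 - t1).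
Proof. by case: Hrun => _ [H _] h le; case: (H k i h) => _ /(_ t1 t2 le) []. Qed.

Lemma dyn_off {k i t1 t2} : mc k = Some i -> t1 <= t2 ->
  (forall u, t1 <= u < t2 -> sc i u <> Some k) -> rm k t2 = rm k t1.
Proof. by case: Hrun => _ [H _] h le; case: (H k i h) => _ /(_ t1 t2 le) []. Qed.

Lemma sched_some {i u k} : sc i u = Some k ->
  act i k u /\ forall k', act i k' u -> rho i k' <= rho i k.
Proof. by case: Hrun => _ [_ [H _]]; have := H i u; case: (sc i u) => // k0 h [<-]. Qed.

Lemma sched_none {i u} : sc i u = None -> forall k, ~ act i k u.
Proof. by case: Hrun => _ [_ [H _]]; have := H i u; case: (sc i u). Qed.

Lemma act_mach {i k u} : act i k u -> mc k = Some i.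
Proof. by case. Qed.

Lemma pw_sched i (Pr : R -> R -> Prop) :
  (forall t1 t2, t1 < t2 -> (forall u, t1 <= u < t2 -> sc i u = sc i t1) -> Pr t1 t2) ->
  (forall t, Pr t t) ->
  (forall t1 t2 t3, t1 <= t2 -> t2 <= t3 -> Pr t1 t2 -> Pr t2 t3 -> Pr t1 t3) ->
  forall t1 t2, t1 <= t2 -> Pr t1 t2.
Proof.
move=> base refl comp.
case: Hrun => [[bs Hbs] _].
apply: (@pw_ind R bs) => // t1 t2 le nb.
have [e12|lt12] := eqVneq t1 t2; first by rewrite e12.
have lt : t1 < t2 by rewrite lt_neqAle lt12 le.
apply: base => // u /andP[h1 h2].
symmetry; apply: (Hbs i t1 u h1) => b bin /andP[c1 c2].
by apply: (nb b bin); rewrite c1 /=; apply: le_lt_trans c2 h2.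
Qed.

Lemma rem_mono {k i t1 t2} : mc k = Some i -> t1 <= t2 ->
  rm k t2 <= rm k t1 /\ rm k t1 - rm k t2 <= t2 - t1.
Proof.
move=> hk; move: t1 t2; apply: (pw_sched i).
- move=> t1 t2 lt cst12.
  case e: (sc i t1 == Some k).
  + rewrite (dyn_on hk (ltW lt)); last by move=> u /cst12 ->; apply/eqP.
    split; lra.
  + rewrite (dyn_off hk (ltW lt)); last by move=> u /cst12 ->; apply/eqP; rewrite e.
    split; lra.
- move=> t; split; lra.
- move=> t1 t2 t3 _ _ [a1 a2] [b1 b2]; split; lra.
Qed.

Lemma rem_lip {k i x y} : mc k = Some i -> `|rm k x - rm k y| <= 1 * `|x - y|.
Proof.
move=> hk; rewrite mul1r.
have [le|le] := leP x y.
  have [h1 h2] := rem_mono hk le.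
  rewrite ger0_norm ?subr_ge0 // ler0_norm; lra.
have [h1 h2] := rem_mono hk (ltW le).
rewrite ler0_norm ?subr_le0 // ger0_norm; lra.
Qed.

Lemma rem_stuck {k i t1 t2} : mc k = Some i -> t1 <= t2 -> rm k t1 <= 0 -> rm k t2 = rm k t1.
Proof.
move=> hk; move: t1 t2; apply: (@pw_sched i (fun t1 t2 => rm k t1 <= 0 -> rm k t2 = rm k t1)).
- move=> t1 t2 lt cst12 h.
  apply: (dyn_off hk (ltW lt)) => u /cst12 ->.
  case e: (sc i t1) => [k0|] // [ek]; move: e; rewrite ek => /sched_some [[_ [_ [q [_ [hp _]]]]] _].
  by have := lt_le_trans hp h; rewrite ltxx.
- by [].
- move=> t1 t2 t3 _ _ h1 h2 h; rewrite h2 h1 //; rewrite h1 //.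
Qed.

Lemma rem_pre {k i t1 t2} : mc k = Some i -> t1 <= t2 -> t2 <= ad k -> rm k t2 = rm k t1.
Proof.
move=> hk le le2; apply: (dyn_off hk le) => u /andP[_ ut] e.
have [[_ [h _]] _] := sched_some e.
have := le_trans h (ltW (lt_le_trans ut le2)); lra.
Qed.



Lemma rem_nonneg {k i t} : mc k = Some i -> ad k <= t -> 0 <= rm k t.
Proof.
move=> hk le; have [q [hq rq]] := adm_q hk.
rewrite leNgt; apply/negP => neg.
have fa : 0 < rm k (ad k) by rewrite rq (q_gt0 hq).
have [c [ac ct c0 _]] := @first_zero R (rm k) 1 (ad k) t ltr01
   (fun x y => rem_lip hk) le fa (ltW neg).
have c0' : rm k c <= 0 by rewrite c0.
have := rem_stuck hk ct c0'; rewrite c0 => e; move: neg; rewrite e ltxx.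
by [].
Qed.

Lemma rem_le_q {k i q t} : mc k = Some i -> p i k = Some q -> rm k t <= q.
Proof.
move=> hk hq; have [q' [hq' rq]] := adm_q hk.
have eq : q' = q by move: hq'; rewrite hq => -[].
rewrite -eq -rq.
have [h|h] := leP t (ad k).
  by rewrite (rem_pre hk h (lexx _)).
by have [] := rem_mono hk (ltW h).
Qed.

Lemma act_down {i j u u'} : act i j u -> ad j <= u' -> u' <= u -> act i j u'.
Proof.
case=> hm [_ [q [hq [pos H]]]] h1 h2; split => //; split => //; exists q; split => //; split.
  by have [] := rem_mono hm h2 => le _; apply: lt_le_trans pos le.
by move=> t /andP[t1 t2]; apply: H; rewrite t1 (le_trans t2 h2).
Qed.

Lemma busy_sum {i} {X : pred 'I_n} {t1 t2} : (forall k, X k -> mc k = Some i) -> t1 <= t2 ->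
  (forall u, t1 <= u < t2 -> exists k, X k /\ sc i u = Some k) ->
  \sum_(k | X k) (rm k t1 - rm k t2) = t2 - t1.
Proof.
move=> HX; move: t1 t2; apply: (@pw_sched i (fun t1 t2 =>
  (forall u, t1 <= u < t2 -> exists k, X k /\ sc i u = Some k) ->
  \sum_(k | X k) (rm k t1 - rm k t2) = t2 - t1)).
- move=> t1 t2 lt c12 H.
  have h0 : t1 <= t1 < t2 by rewrite lexx lt.
  have [k0 [Xk0 e0]] := H t1 h0.
  rewrite (bigD1 k0) //= big1 ?addr0.
  + rewrite (dyn_on (HX _ Xk0) (ltW lt)); first lra.
    by move=> u hu; rewrite c12.
  + move=> k /andP[Xk nk]; rewrite (dyn_off (HX _ Xk) (ltW lt)) ?subrr // => u hu.
    by rewrite c12 // e0 => -[ek]; move: nk; rewrite ek eqxx.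
- by move=> t _; rewrite subrr; apply: big1 => k _; rewrite subrr.
- move=> t1 t2 t3 l12 l23 h1 h2 H.
  have e : \sum_(k | X k) (rm k t1 - rm k t3) =
     \sum_(k | X k) (rm k t1 - rm k t2) + \sum_(k | X k) (rm k t2 - rm k t3).
    by rewrite -big_split; apply: eq_bigr => k _ /=; lra.
  rewrite e h1 ?h2; first lra.
  + by move=> u /andP[u1 u2]; apply: H; rewrite u2 (le_trans l12 u1).
  + by move=> u /andP[u1 u2]; apply: H; rewrite u1 (lt_le_trans u2 l23).
Qed.

Definition PP (k j : 'I_n) : Prop := exists i, [/\ mc k = Some i, actb i j (ad k),
  (forall j', actb i j' (ad k) -> rho i j' <= rho i j) & thresholds eps w p i k j].

Lemma adm_PP {k i j'} : mc k = Some i -> actb i j' (ad k) -> exists jm, PP k jm.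
Proof.
move=> hk hj.
case: Hrun => _ [_ [_ [Hadm Hmach]]].
have [ev ck] := Hmach k i hk.
have [_ H2] := Hadm _ ev i.
have [_ [_ [_ H4]]] := H2 k ck.
have [jm [ha [hmax hiff]]] := H4 (ex_intro _ j' hj).
by exists jm, i; split => //; apply/hiff.
Qed.

Lemma same_adm {k k' i} : mc k = Some i -> mc k' = Some i -> ad k = ad k' -> k = k'.
Proof.
move=> h1 h2 e.
case: Hrun => _ [_ [_ [_ Hmach]]].
have [_ c1] := Hmach k i h1; have [_ c2] := Hmach k' i h2.
by move: c1; rewrite e c2 => -[].
Qed.

Lemma k8 : 4 <= 8 / e'.
Proof. rewrite ler_pdivlMr ?e'_gt0 //; have := e'_le1; lra. Qed.

Lemma thr_rho {i c k} : thresholds eps w p i c k -> 4 * rho i k <= rho i c.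
Proof.
case=> qs [q [hqs [hq H]]].
have q0 := q_gt0 hq; have qs0 := q_gt0 hqs.
have r0 := rho_ge0 i k.
case: H => [[_ h]|[/andP[_ h1] h2]|[_ h]] //.
- by apply: le_trans h; apply: ler_wpM2r => //; exact: k8.
- rewrite (rhoE hq) (rhoE hqs) mulrA ler_pdivrMr //.
  have e : w c = w c / qs * qs by rewrite divfK // gt_eqF.
  apply: le_trans h2 _; rewrite {1}e; apply: ler_wpM2l => //.
  by rewrite divr_ge0 // ltW // w_gt0.
Qed.

Lemma thr_cases {i c k} : thresholds eps w p i c k ->
  8 / e' * rho i k <= rho i c \/ 4 * w k <= w c.
Proof.
case=> qs [q [hqs [hq H]]].
have q0 := q_gt0 hq; have qs0 := q_gt0 hqs.
case: H => [[_ h]|[_ h2]|[h1 h]]; [by left|by right|right].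
move: h; rewrite (rhoE hq) (rhoE hqs) mulrA ler_pdivrMr // => h.
have e : w c = w c / qs * qs by rewrite divfK // gt_eqF.
apply: le_trans h _; rewrite {2}e; apply: ler_wpM2l; last exact: ltW.
by rewrite divr_ge0 // ltW // w_gt0.
Qed.

Lemma E4 {k i j'} : mc k = Some i -> actb i j' (ad k) -> 4 * rho i j' <= rho i k.
Proof.
move=> hk hj; have [jm [i' [hk' hjm hmax hthr]]] := adm_PP hk hj.
have ei : i' = i by move: hk'; rewrite hk => -[].
subst i'.
apply: le_trans (thr_rho hthr); rewrite ler_pM2l //; exact: hmax.
Qed.

Definition par (k : 'I_n) : option 'I_n :=
  match pselect (exists j, PP k j) with
  | left h => Some (projT1 (cid h))
  | right _ => None end.

Lemma parP {k j} : par k = Some j -> PP k j.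
Proof. by rewrite /par; case: pselect => // h [<-]; exact: (projT2 (cid h)). Qed.

Lemma par_some {k i j'} : mc k = Some i -> actb i j' (ad k) -> exists j, par k = Some j.
Proof.
move=> hk hj; rewrite /par; case: pselect => [h|h]; first by eexists.
by exfalso; apply: h; exact: adm_PP hk hj.
Qed.

Lemma parI {c k} : par c = Some k -> exists i, [/\ mc c = Some i, mc k = Some i,
  ad k < ad c, 4 * rho i k <= rho i c & thresholds eps w p i c k].
Proof.
move=> /parP [i [hc [hka hlt] _ hthr]]; exists i; split => //.
- exact: act_mach hka.
- exact: thr_rho.
Qed.

Inductive desc : 'I_n -> 'I_n -> Prop :=
| dR k : desc k k
| dC k c k' : par c = Some k -> desc c k' -> desc k k'.
Arguments dC {k c k'}.

Lemma desc_adm {k k'} : desc k k' -> ad k <= ad k'.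
Proof.
elim=> [k0|k0 c k'0 pc _ IH]; first exact: lexx.
by have [i [_ _ lt _ _]] := parI pc; apply: le_trans IH; apply: ltW.
Qed.

Lemma desc_mach {k k'} : desc k k' -> mc k' = mc k.
Proof.
elim=> [//|k0 c k'0 pc _ IH].
by have [i [h1 h2 _ _ _]] := parI pc; rewrite IH h1 h2.
Qed.

Lemma desc_snoc {j pp k} : desc j pp -> par k = Some pp -> desc j k.
Proof.
elim=> [k0|k0 c k'0 pc _ IH] h.
  by apply: (dC h); exact: dR.
by apply: (dC pc); apply: IH.
Qed.

Lemma desc_up {b c} : desc b c -> c <> b -> exists pp, par c = Some pp /\ desc b pp.
Proof.
elim=> [k0 //|k0 c1 c0 pc1 d1 IH] nc.
have [e|ne] := eqVneq c0 c1.
  by exists k0; rewrite e; split => //; exact: dR.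
have ne' : c0 <> c1 by apply/eqP.
have [pp [h1 h2]] := IH ne'.
by exists pp; split => //; exact: (dC pc1).
Qed.

Lemma desc_cmp {a b k'} : desc a k' -> desc b k' -> desc a b \/ desc b a.
Proof.
move=> da; elim: da b => [k0|a0 c k0 pc dc IH] b db; first by right.
have [h|h] := IH b db.
  by left; exact: (dC pc).
have [e|ne] := eqVneq b c.
  by left; rewrite e; apply: (dC pc); exact: dR.
have ne' : c <> b by move=> e; move: ne; rewrite e eqxx.
have [pp [h1 h2]] := desc_up h ne'.
by right; move: h1; rewrite pc => -[->].
Qed.

Lemma desc_inv {k k'} : desc k k' -> k' <> k -> exists c, par c = Some k /\ desc c k'.
Proof. by case=> [k0 //|k0 c k'0 pc dc] _; exists c. Qed.

Lemma child_not {c k} : par c = Some k -> ~ desc c k.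
Proof.
move=> pc dc; have [i [_ _ lt _ _]] := parI pc; have := desc_adm dc.
by rewrite leNgt lt.
Qed.

Lemma child_uniq {c1 c2 k k'} : par c1 = Some k -> par c2 = Some k ->
  desc c1 k' -> desc c2 k' -> c1 = c2.
Proof.
move=> p1 p2 d1 d2.
have [e|ne] := eqVneq c1 c2 => //.
have [h|h] := desc_cmp d1 d2.
  have ne' : c2 <> c1 by move=> e; move: ne; rewrite e eqxx.
  have [pp [h1 h2]] := desc_up h ne'.
  by move: h1; rewrite p2 => -[ep]; subst pp; case: (child_not p1 h2).
have ne' : c1 <> c2 by apply/eqP.
have [pp [h1 h2]] := desc_up h ne'.
by move: h1; rewrite p1 => -[ep]; subst pp; case: (child_not p2 h2).
Qed.

Lemma desc_sum (f : 'I_n -> R) k :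
  \sum_(k' | `[< desc k k' >]) f k' =
  f k + \sum_(c | par c == Some k) \sum_(k' | `[< desc c k' >]) f k'.
Proof.
rewrite (bigD1 k) /=; last by apply/asboolP; exact: dR.
congr (_ + _).
rewrite (exchange_big_dep (fun k' => `[< desc k k' >] && (k' != k))) /=; last first.
  move=> c k' /eqP pc /asboolP dc; apply/andP; split.
    by apply/asboolP; exact: (dC pc).
  by apply/eqP => e; move: dc; rewrite e; exact: child_not pc.
apply: eq_bigr => k' /andP[/asboolP dk nk].
have nk' : k' <> k by apply/eqP.
have [c0 [pc0 dc0]] := desc_inv dk nk'.
rewrite (bigD1 c0) /=; last by rewrite pc0 eqxx; apply/asboolP.
rewrite big1 ?addr0 // => c /andP[/andP[/eqP pc /asboolP dc] nc].
by exfalso; move/eqP: nc; apply; exact: child_uniq pc pc0 dc dc0.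
Qed.

Lemma desc_of_active N : forall k j i, (#|[set x | (ad x < ad k)%R]| < N)%N ->
  mc k = Some i -> ad j <= ad k -> act i j (ad k) -> desc j k.
Proof.
elim: N => [//|N IH] k j i hN hk hjk ha.
have [ejk|njk] := eqVneq j k; first by rewrite ejk; exact: dR.
have hj := act_mach ha.
have ltjk : ad j < ad k.
  rewrite lt_neqAle hjk andbT; apply/eqP => e.
  by move: njk; rewrite (same_adm hj hk e) eqxx.
have hab : actb i j (ad k) by split.
have [pp hp] := par_some hk hab.
have [i' [hk' [hpa hpl] hmax _]] := parP hp.
have ei : i' = i by move: hk'; rewrite hk => -[].
subst i'.
have hpm := act_mach hpa.
have rj := hmax j hab.
have hjp : ad j <= ad pp.
  rewrite leNgt; apply/negP => lt.
  have a2 : act i pp (ad j) := act_down hpa (ltW lt) hjk.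
  have h4 := E4 hj (conj a2 lt).
  have [q [hq _]] := adm_q hpm; have := rho_gt0 hq; lra.
apply: (desc_snoc _ hp); apply: (IH pp j i) => //.
- have : [set x | ad x < ad pp] \proper [set x | ad x < ad k].
    apply/properP; split.
      by apply/fintype.subsetP => x; rewrite !inE => h; exact: lt_trans h hpl.
    by exists pp; rewrite !inE ?hpl ?ltxx.
  move/proper_card => h; rewrite ltnS in hN; exact: leq_trans h hN.
- exact: act_down ha hjp (ltW hpl).
Qed.

Lemma desc_sched {i j u k} : act i j u -> sc i u = Some k -> desc j k.
Proof.
move=> ha hs; have [hka hmax] := sched_some hs.
have hj := act_mach ha; have hk := act_mach hka.
have rj := hmax j ha.
have hjk : ad j <= ad k.
  rewrite leNgt; apply/negP => lt.
  have a2 : act i k (ad j) := act_down hka (ltW lt) ha.2.1.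
  have h4 := E4 hj (conj a2 lt).
  have [q [hq _]] := adm_q hk; have := rho_gt0 hq; lra.
apply: (@desc_of_active #|[set: 'I_n]|.+1 k j i) => //.
- by rewrite ltnS; apply: subset_leq_card; apply: finset.subsetT.
- exact: act_down ha hjk hka.2.1.
Qed.

Lemma window {j i q} : mc j = Some i -> p i j = Some q -> ~ finished s j ->
  exists tau, [/\ ad j < tau, tau <= ad j + cs * q,
     (forall u, ad j <= u <= tau -> act i j u) & rm j tau = ad j + cs * q - tau].
Proof.
move=> hj hq nf.
have [q' [hq' rq]] := adm_q hj.
have eqq : q' = q by move: hq'; rewrite hq => -[].
rewrite eqq in rq; clear hq' eqq.
have q0 := q_gt0 hq.
have e0 := e'_gt0; have e1 := e'_le1.
have eq0 : 0 < e' / 2 * q by rewrite mulr_gt0 // divr_gt0.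
have csq : cs * q = q + e' / 2 * q by rewrite cs_def mulrDl mul1r.
set a := ad j in rq *.
set t1 := a + cs * q.
have at1 : a <= t1 by rewrite /t1; lra.
have pos1 : 0 < rm j t1.
  rewrite ltNge; apply/negP => neg.
  have fa : 0 < rm j a by rewrite rq.
  have [c [ac ct c0 cpos]] := @first_zero R (rm j) 1 a t1 ltr01
     (fun x y => rem_lip hj) at1 fa neg.
  apply: nf; exists c; split; first by rewrite /admitted hj.
  split; first exact: ltW.
  split => // t /andP[h1 h2]; apply: cpos; rewrite h1 h2.
pose f := fun t => a + cs * q - t - rm j t.
have lipf : forall x y, `|f x - f y| <= 2 * `|x - y|.
  move=> x y; rewrite /f.
  have h := rem_lip (x := x) (y := y) hj; rewrite mul1r in h.
  have -> : a + cs * q - x - rm j x - (a + cs * q - y - rm j y) =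
            (y - x) + (rm j y - rm j x) by lra.
  apply: le_trans (ler_normD _ _) _.
  rewrite distrC (distrC (rm j y)); lra.
have fa : 0 < f a by rewrite /f rq; lra.
have fb : f t1 <= 0 by rewrite /f /t1; lra.
have two0 : (0 : R) < 2 by [].
have [tau [atau taut1 ft0 fpos]] := @first_zero R f 2 a t1 two0 lipf at1 fa fb.
exists tau.
have rtau : rm j tau = a + cs * q - tau by move: ft0; rewrite /f; lra.
have tault : tau < t1.
  rewrite lt_neqAle taut1 andbT; apply/eqP => e; move: ft0; rewrite e /f /t1; lra.
split => //.
move=> u /andP[au ut].
split => //; split => //; exists q; split => //; split.
  by have [le _] := rem_mono hj ut; rewrite /t1 in tault; lra.
move=> t /andP[h1 h2].
have [tl|tge] := ltP t tau.
  by have := fpos t; rewrite h1 tl /f /= => /(_ isT); rewrite -/a; lra.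
have -> : t = tau by apply/eqP; rewrite eq_le tge (le_trans h2 ut).
rewrite -/a; lra.
Qed.

Definition qv (k : 'I_n) : R :=
  match mc k with Some i => odflt 0 (p i k) | None => 0 end.

Lemma qvE {k i q} : mc k = Some i -> p i k = Some q -> qv k = q.
Proof. by rewrite /qv => -> ->. Qed.

Lemma unfinished_key {j i q} (Tb : R) : mc j = Some i -> p i j = Some q ->
  ~ finished s j -> ad j + cs * q <= Tb ->
  e' / 2 * q <= \sum_(k | `[< desc j k >] && (k != j)) (qv k - rm k Tb).
Proof.
move=> hj hq nf hT.
have [tau [atau taut hact rt]] := window hj hq nf.
have [q' [hq' rq]] := adm_q hj.
have eqq : q' = q by move: hq'; rewrite hq => -[].
rewrite eqq in rq; clear hq' eqq.
have HX : forall k, `[< desc j k >] -> mc k = Some i.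
  by move=> k /asboolP dk; rewrite (desc_mach dk).
have Hu : forall u, ad j <= u < tau -> exists k, `[< desc j k >] /\ sc i u = Some k.
  move=> u /andP[u1 u2].
  have ha : act i j u by apply: hact; rewrite u1 (ltW u2).
  case e: (sc i u) => [k|]; last by case: (sched_none e j ha).
  by exists k; split => //; apply/asboolP; exact: desc_sched ha e.
have hb := busy_sum (i := i) (X := fun k => `[< desc j k >]) HX (ltW atau) Hu.
rewrite (bigD1 j) /= in hb; last by apply/asboolP; exact: dR.
rewrite rq rt in hb.
have csq : cs * q = q + e' / 2 * q by rewrite cs_def mulrDl mul1r.
have hs : \sum_(k | `[< desc j k >] && (k != j)) (rm k (ad j) - rm k tau) = e' / 2 * q by lra.
rewrite -hs; apply: ler_sum => k /andP[/asboolP dk nk].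
have hk : mc k = Some i by rewrite (desc_mach dk).
have [qk [hqk _]] := adm_q hk.
rewrite (qvE hk hqk).
have h1 := rem_le_q (t := ad j) hk hqk.
have [h2 _] := rem_mono hk (le_trans taut hT).
lra.
Qed.

Definition Tb : R := \sum_k (`|ad k| + cs * `|qv k|).
Definition Pk (k : 'I_n) : R := qv k - rm k Tb.
Definition sg (k : 'I_n) : R :=
  if `[< finished s k >] then w k else if admitted s k then - w k else 0.
Definition Xs (k : 'I_n) : R := \sum_(k' | `[< desc k k' >]) sg k'.
Definition Ys (k : 'I_n) : R := \sum_(k' | `[< desc k k' >]) Pk k'.

Lemma cs_gt0 : 0 < cs.
Proof. rewrite cs_def; have := e'_gt0; lra. Qed.

Lemma Tb_ge k : ad k + cs * qv k <= Tb.
Proof.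
rewrite /Tb (bigD1 k) //=.
have h1 : ad k <= `|ad k| by exact: ler_norm.
have h2 : cs * qv k <= cs * `|qv k| by rewrite ler_pM2l ?cs_gt0 // ler_norm.
have h3 : 0 <= \sum_(i0 | i0 != k) (`|ad i0| + cs * `|qv i0|).
  by apply: sumr_ge0 => i0 _; rewrite addr_ge0 // mulr_ge0 // ltW // cs_gt0.
lra.
Qed.

Lemma P_bounds {k i q} : mc k = Some i -> p i k = Some q -> 0 <= Pk k /\ Pk k <= q.
Proof.
move=> hk hq; rewrite /Pk (qvE hk hq).
have q0 := q_gt0 hq.
have h := Tb_ge k; rewrite (qvE hk hq) in h.
have h' : ad k <= Tb by have := mulr_gt0 cs_gt0 q0; lra.
have := rem_le_q (t := Tb) hk hq; have := rem_nonneg hk h'.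
split; lra.
Qed.

Lemma Ys_ge0 {k i} : mc k = Some i -> 0 <= Ys k.
Proof.
move=> hk; apply: sumr_ge0 => k' /asboolP dk.
have hk' : mc k' = Some i by rewrite (desc_mach dk).
have [q [hq _]] := adm_q hk'.
by case: (P_bounds hk' hq).
Qed.

Lemma fin_adm {k} : finished s k -> admitted s k.
Proof. by case=> t []. Qed.

Lemma inv N : forall k i, (#|[set x | (ad k < ad x)%R]| < N)%N -> mc k = Some i ->
  w k <= Xs k /\ rho i k * Ys k <= Xs k.
Proof.
elim: N => [//|N IH] k i hN hk.
have [q [hq _]] := adm_q hk.
have decX : Xs k = sg k + \sum_(c | par c == Some k) Xs c := desc_sum sg k.
have decY : Ys k = Pk k + \sum_(c | par c == Some k) Ys c := desc_sum Pk k.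
have ch : forall c, par c == Some k -> [/\ mc c = Some i, 4 * rho i k <= rho i c,
    thresholds eps w p i c k, w c <= Xs c & rho i c * Ys c <= Xs c /\ 0 <= Ys c].
  move=> c /eqP pc; have [i' [hc hk' lt h4 hthr]] := parI pc.
  have ei : i' = i by move: hk'; rewrite hk => -[].
  subst i'.
  have [IH1 IH2] : w c <= Xs c /\ rho i c * Ys c <= Xs c.
    apply: (IH c i) => //.
    have : [set x | (ad c < ad x)%R] \proper [set x | (ad k < ad x)%R].
      apply/properP; split.
        by apply/fintype.subsetP => x; rewrite !inE => h; exact: lt_trans lt h.
      by exists c; rewrite !inE ?lt ?ltxx.
    move/proper_card => h; rewrite ltnS in hN; exact: leq_trans h hN.
  by split => //; split => //; exact: Ys_ge0 hc.
have rk0 := rho_gt0 hq.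
have rkq : rho i k * q = w k by rewrite (rhoE hq) divfK // gt_eqF // (q_gt0 hq).
have [P0 Pq] := P_bounds hk hq.
have rP : rho i k * Pk k <= w k by rewrite -rkq ler_pM2l.
have chY : forall c, par c == Some k -> rho i k * Ys c <= Xs c.
  move=> c pc; have [_ h4 _ _ [h5 h6]] := ch c pc.
  apply: le_trans h5; apply: ler_wpM2r => //; have := rho_ge0 i k; lra.
have sXY : rho i k * \sum_(c | par c == Some k) Ys c <= \sum_(c | par c == Some k) Xs c.
  by rewrite mulr_sumr; apply: ler_sum.
have sX0 : 0 <= \sum_(c | par c == Some k) Xs c.
  apply: sumr_ge0 => c pc; have [_ _ _ h _] := ch c pc.
  by apply: le_trans h; apply: ltW; apply: w_gt0.
have sY0 : 0 <= \sum_(c | par c == Some k) Ys c.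
  by apply: sumr_ge0 => c pc; have [_ _ _ _ [_ h]] := ch c pc.
have wk0 := w_gt0 k.
have [fk|nfk] := pselect (finished s k).
  have e : sg k = w k by rewrite /sg; case: asboolP.
  rewrite decX decY e mulrDr; split; lra.
have e : sg k = - w k.
  rewrite /sg; case: asboolP => // _; by rewrite /admitted hk.
have hT : ad k + cs * q <= Tb by have := Tb_ge k; rewrite (qvE hk hq).
have key : e' / 2 * q <= \sum_(c | par c == Some k) Ys c.
  have h1 := unfinished_key Tb hk hq nfk hT.
  have h2 : Ys k = Pk k + \sum_(k' | `[< desc k k' >] && (k' != k)) Pk k'.
    by rewrite /Ys (bigD1 k) //=; apply/asboolP; exact: dR.
  move: h1 h2 decY; rewrite /Pk; lra.
have e0 := e'_gt0; have e1 := e'_le1.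
set SX := \sum_(c | par c == Some k) Xs c in decX sX0 sXY *.
set SY := \sum_(c | par c == Some k) Ys c in decY sY0 sXY key *.
set rk := rho i k in rk0 rkq rP sXY chY *.
suff hS : 2 * w k + rk * SY <= SX.
  rewrite decX decY e mulrDr; have : 0 <= rk * SY by rewrite mulr_ge0 // ltW.
  split; lra.
have [[c0 [pc0 hw]]|nc] := pselect (exists c0, par c0 == Some k /\ 4 * w k <= w c0).
  have [_ h4 _ hX1 [hX2 hY0]] := ch c0 pc0.
  rewrite /SX /SY (bigD1 c0) //= (bigD1 c0 (P := fun c => par c == Some k)) //=.
  have h5 : (4 * rk) * Ys c0 <= rho i c0 * Ys c0 by apply: ler_wpM2r.
  have h6 : 0 <= rk * Ys c0 by rewrite mulr_ge0 // ltW.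
  have h7 : rk * \sum_(c | (par c == Some k) && (c != c0)) Ys c <=
            \sum_(c | (par c == Some k) && (c != c0)) Xs c.
    by rewrite mulr_sumr; apply: ler_sum => c /andP[pc _]; apply: chY.
  rewrite mulrDr; rewrite -mulrA in h5; lra.
have h8 : forall c, par c == Some k -> 8 / e' * rk * Ys c <= Xs c.
  move=> c pc; have [_ _ hthr hX1 [hX2 hY0]] := ch c pc.
  case: (thr_cases hthr) => [h|h]; last by exfalso; apply: nc; exists c.
  by apply: le_trans hX2; apply: ler_wpM2r.
have h9 : 8 / e' * rk * SY <= SX.
  by rewrite /SX /SY mulr_sumr; apply: ler_sum.
set K := 8 / e' in h8 h9.
have hK : K * e' = 8 by rewrite /K divfK // gt_eqF.
have K1 : 1 <= K by have := k8; rewrite -/K; lra.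
have hZ : e' * w k / 2 <= rk * SY.
  have -> : e' * w k / 2 = rk * (e' / 2 * q) by rewrite -rkq; ring.
  by rewrite ler_pM2l.
have hP : 0 <= (K - 1) * (rk * SY - e' * w k / 2) by rewrite mulr_ge0 // ?subr_ge0.
have hE : (K - 1) * (rk * SY - e' * w k / 2) = K * rk * SY - rk * SY - (K * e') * w k / 2 + e' * w k / 2 by ring.
rewrite hK in hE.
have hew : e' * w k <= w k by rewrite ler_piMl // ltW.
lra.
Qed.

Lemma Xs_ge0 c : 0 <= Xs c.
Proof.
case hc: (mc c) => [i|].
  have hc' : (#|[set x | (ad c < ad x)%R]| < #|[set: 'I_n]|.+1)%N.
    by rewrite ltnS; apply: subset_leq_card; apply: finset.subsetT.
  have [h _] := @inv #|[set: 'I_n]|.+1 c i hc' hc.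
  by apply: le_trans h; apply: ltW; apply: w_gt0.
rewrite /Xs desc_sum big1 ?addr0.
  rewrite /sg; case: asboolP => [/fin_adm|_]; by rewrite /admitted hc.
by move=> dd /eqP pd; have [i [_ h2 _ _ _]] := parI pd; rewrite hc in h2.
Qed.

Lemma sum_sg : \sum_k sg k = \sum_(c | par c == None) Xs c.
Proof.
have h : \sum_k Xs k = \sum_k sg k + \sum_k \sum_(c | par c == Some k) Xs c.
  by rewrite -big_split; apply: eq_bigr => k _; exact: desc_sum.
rewrite [X in _ = _ + X](exchange_big_dep (fun c => par c != None)) /= in h; last by move=> k c _ /eqP ->.
have h2 : \sum_(c | par c != None) \sum_(k | par c == Some k) Xs c =
          \sum_(c | par c != None) Xs c.
  apply: eq_bigr => c; case e: (par c) => [k0|] // _.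
  by rewrite (big_pred1 k0) //= => k /=.
rewrite h2 in h.
rewrite (bigID (fun c => par c == None)) /= in h.
lra.
Qed.

Lemma main_ineq : 1 / 2 * (\sum_(j < n | admitted s j) w j) <=
    \sum_(j < n | `[< finished s j >]) w j.
Proof.
have S0 : 0 <= \sum_k sg k.
  by rewrite sum_sg; apply: sumr_ge0 => c _; exact: Xs_ge0.
have e : \sum_(j < n | admitted s j) w j =
   2 * (\sum_(j < n | `[< finished s j >]) w j) - \sum_k sg k.
  rewrite big_mkcond [X in 2 * X]big_mkcond /= mulr_sumr -sumrB.
  apply: eq_bigr => k _; rewrite /sg; case: asboolP => [f|nf].
    by rewrite (fin_adm f); lra.
  by case: (admitted s k) => /=; lra.
rewrite e; lra.
Qed.
End Main.

Theorem theorem3 (R : realType) (m n : nat) (eps : R)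
    (r w d : 'I_n -> R) (p : 'I_m -> 'I_n -> option R) (s : run R m n) :
  valid_instance eps w p ->
  slack_assumption eps r d p ->
  is_two_threshold_run eps r w d p s ->
  1 / 2 * (\sum_(j < n | admitted s j) w j) <=
    \sum_(j < n | `[< finished s j >]) w j.
Proof. by move=> Hv _ Hrun; exact: main_ineq Hv Hrun. Qed.
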